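(* \textsf{SpecRel} $\vdash$ the following sentence: for all bodies $o,o'$ and all $\bar x,\bar x',\bar y,\bar y'\in Q^4$, if $\mathsf{IOb}(o)$, $\mathsf{IOb}(o')$, $\forall b\,(\mathsf{W}(o,b,\bar x)\leftrightarrow\mathsf{W}(o',b,\bar x'))$ and $\forall b\,(\mathsf{W}(o,b,\bar y)\leftrightarrow\mathsf{W}(o',b,\bar y'))$, then $\mu(\bar x,\bar y)=\mu(\bar x',\bar y')$, where $\mu(\bar x,\bar y):=(x_1-y_1)^2+(x_2-y_2)^2+(x_3-y_3)^2-(x_4-y_4)^2$. Here $\vdash$ denotes derivability in a standard proof system of first-order logic.
   Context: Two-sorted first-order language $\{B,\mathsf{IB},\mathsf{Ph},Q,+,\cdot,<,\mathsf{W}\}$: sorts $B$ (bodies) and $Q$ (quantities); $\mathsf{IB},\mathsf{Ph}$ unary relations on $B$ (inertial bodies, photons); $+,\cdot$ binary functions and $<$ binary relation on $Q$; $\mathsf{W}$ a 6-ary relation of sort $B\,B\,Q\,Q\,Q\,Q$ ($\mathsf{W}(o,b,x,y,z,t)$: observer $o$ coordinatizes body $b$ at $\langle x,y,z,t\rangle$). Bars denote 4-tuples of $Q$-variables. Defined: $\mathsf{Ob}(o):\iff\exists b\,\bar x\ \mathsf{W}(o,b,\bar x)$; $\mathsf{IOb}(o):\iff \mathsf{IB}(o)\wedge\mathsf{Ob}(o)$. \textsf{SpecRel} consists of the axioms: AxField: $\langle Q;+,\cdot,<\rangle$ is a linearly ordered field (with zero $0$). AxSelf: $\forall o\,x y z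 t\ \mathsf{IOb}(o)\to(\mathsf{W}(o,o,x,y,z,t)\leftrightarrow x=y=z=0)$. AxPh: $\forall o\,\bar x\,\bar x'\ \mathsf{IOb}(o)\to\big(\exists p(\mathsf{Ph}(p)\wedge\mathsf{W}(o,p,\bar x)\wedge\mathsf{W}(o,p,\bar x'))\leftrightarrow (x_1-x'_1)^2+(x_2-x'_2)^2+(x_3-x'_3)^2=(x_4-x'_4)^2\big)$. AxEv: $\forall o\,o'\,\bar x\ \mathsf{IOb}(o)\wedge\mathsf{IOb}(o')\to\exists\bar x'\,\forall b\ (\mathsf{W}(o,b,\bar x)\leftrightarrow\mathsf{W}(o',b,\bar x'))$. AxSymd: for all $o,o',\bar x,\bar x',\bar y,\bar y'$: if $\mathsf{IOb}(o)$, $\mathsf{IOb}(o')$, $x_4=y_4$, $x'_4=y'_4$, $\forall b(\mathsf{W}(o,b,\bar x)\leftrightarrow\mathsf{W}(o',b,\bar x'))$ and $\forall b(\mathsf{W}(o,b,\bar y)\leftrightarrow\mathsf{W}(o',b,\bar y'))$, then $(x_1-y_1)^2+(x_2-y_2)^2+(x_3-y_3)^2=(x'_1-y'_1)^2+(x'_2-y'_2)^2+(x'_3-y'_3)^2$. *)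

(* Defs.v *)
(* A model of the two-sorted language: the quantity sort Q is a
   realFieldType (= linearly ordered field, i.e. AxField), bodies form a type B. *)
From HB Require Import structures.
From mathcomp Require Import all_boot all_order all_algebra.
Set Implicit Arguments. Unset Strict Implicit. Unset Printing Implicit Defensive.
Import Order.TTheory GRing.Theory Num.Theory.
Local Open Scope ring_scope.

Section SpecRelDefs.
Variables (Q : realFieldType) (B : Type).
Variables (IB Ph : B -> Prop) (W : B -> B -> Q -> Q -> Q -> Q -> Prop).

Definition Ob (o : B) : Prop := exists b x y z t, W o b x y z t.
Definition IOb (o : B) : Prop := IB o /\ Ob o.

Definition AxSelf : Prop :=
  forall o x y z t, IOb o -> (W o o x y z t <-> (x = 0 /\ y = 0 /\ z = 0)).

Definition AxPh : Prop :=
  forall o x1 x2 x3 x4 x1' x2' x3' x4', IOb o ->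
    ((exists p, Ph p /\ W o p x1 x2 x3 x4 /\ W o p x1' x2' x3' x4') <->
     (x1 - x1') ^+ 2 + (x2 - x2') ^+ 2 + (x3 - x3') ^+ 2 = (x4 - x4') ^+ 2).

Definition AxEv : Prop :=
  forall o o' x1 x2 x3 x4, IOb o -> IOb o' ->
    exists x1' x2' x3' x4',
      forall b, W o b x1 x2 x3 x4 <-> W o' b x1' x2' x3' x4'.

Definition AxSymd : Prop :=
  forall o o' x1 x2 x3 x4 x1' x2' x3' x4' y1 y2 y3 y4 y1' y2' y3' y4',
    IOb o -> IOb o' -> x4 = y4 -> x4' = y4' ->
    (forall b, W o b x1 x2 x3 x4 <-> W o' b x1' x2' x3' x4') ->
    (forall b, W o b y1 y2 y3 y4 <-> W o' b y1' y2' y3' y4') ->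
    (x1 - y1) ^+ 2 + (x2 - y2) ^+ 2 + (x3 - y3) ^+ 2 =
    (x1' - y1') ^+ 2 + (x2' - y2') ^+ 2 + (x3' - y3') ^+ 2.

(* SpecRel; AxField is built into the choice Q : realFieldType. *)
Definition SpecRel : Prop := AxSelf /\ AxPh /\ AxEv /\ AxSymd.
End SpecRelDefs.

Definition mu (Q : realFieldType) (x1 x2 x3 x4 y1 y2 y3 y4 : Q) : Q :=
  (x1 - y1) ^+ 2 + (x2 - y2) ^+ 2 + (x3 - y3) ^+ 2 - (x4 - y4) ^+ 2.

(* Main.v *)
Require Import Defs.
From HB Require Import structures.
From mathcomp Require Import all_boot all_order all_algebra.
From mathcomp Require Import ring lra.
From Stdlib Require Import ClassicalEpsilon.
Import Order.TTheory GRing.Theory Num.Theory.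
Local Open Scope ring_scope.

Section Vec.
Set Implicit Arguments. Unset Strict Implicit.
Variable Q : realFieldType.
Record V := mkV { c1 : Q; c2 : Q; c3 : Q; c4 : Q }.
Definition v0 := mkV 0 0 0 0.
Definition vadd (u v : V) := mkV (c1 u + c1 v) (c2 u + c2 v) (c3 u + c3 v) (c4 u + c4 v).
Definition vsub (u v : V) := mkV (c1 u - c1 v) (c2 u - c2 v) (c3 u - c3 v) (c4 u - c4 v).
Definition vsc (s : Q) (v : V) := mkV (s * c1 v) (s * c2 v) (s * c3 v) (s * c4 v).
Definition ip (u v : V) := c1 u * c1 v + c2 u * c2 v + c3 u * c3 v - c4 u * c4 v.
Definition mu0 (v : V) := ip v v.

Lemma veq (u v : V) : c1 u = c1 v -> c2 u = c2 v -> c3 u = c3 v -> c4 u = c4 v -> u = v.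
Proof. by case: u => ????; case: v => ???? /= -> -> -> ->. Qed.

Ltac vunf := rewrite /mu0 /vadd /vsub /vsc /ip /v0 /=.
Ltac vring := apply veq; vunf; ring.

Lemma sq0 (a b c : Q) : a^+2 + b^+2 + c^+2 = 0 -> a = 0 /\ b = 0 /\ c = 0.
Proof. move=> h; split; [|split]; nra. Qed.

Lemma mu_sub u w : mu0 (vsub u w) = mu0 u + mu0 w - 2 * ip u w.
Proof. vunf; ring. Qed.

Lemma ipC u w : ip u w = ip w u.
Proof. vunf; ring. Qed.

Lemma null_c4 b : mu0 b = 0 -> b <> v0 -> c4 b != 0.
Proof.
move=> hb hn; apply/eqP => h4; apply: hn.
move: hb; rewrite /mu0 /ip h4 => hb.
have [h1 [h2 h3]] : c1 b = 0 /\ c2 b = 0 /\ c3 b = 0 by apply: sq0; rewrite !expr2; lra.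
by apply: veq; rewrite /v0 /=.
Qed.

Lemma L0 a b : mu0 a = 0 -> mu0 b = 0 -> b <> v0 -> ip a b = 0 ->
  a = vsc (c4 a / c4 b) b.
Proof.
move=> ha hb hn hab; have h4 := null_c4 hb hn.
set l := c4 a / c4 b.
have e4 : c4 a = l * c4 b by rewrite /l; field.
have hs : (c1 a - l * c1 b)^+2 + (c2 a - l * c2 b)^+2 + (c3 a - l * c3 b)^+2 = 0.
  have -> : (c1 a - l * c1 b)^+2 + (c2 a - l * c2 b)^+2 + (c3 a - l * c3 b)^+2
    = mu0 a - 2 * l * ip a b + l^+2 * mu0 b + (c4 a - l * c4 b)^+2 by vunf; ring.
  by rewrite ha hb hab e4; ring.
have [h1 [h2 h3]] := sq0 hs.
apply: veq; rewrite /vsc /=; lra.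
Qed.

Lemma null_par k u : mu0 k = 0 -> k <> v0 -> mu0 u = 0 -> mu0 (vsub u k) = 0 ->
  u = vsc (c4 u / c4 k) k.
Proof.
move=> hk hn hu huk; apply: L0 => //.
move: huk; rewrite mu_sub hu hk => h. lra.
Qed.


Section F.
Variable f : V -> V.
Hypothesis finj : injective f.
Hypothesis fsurj : forall y, exists x, f x = y.
Hypothesis fN : forall x y, mu0 (vsub x y) = 0 <-> mu0 (vsub (f x) (f y)) = 0.

Lemma mu_sc s v : mu0 (vsc s v) = s^+2 * mu0 v.
Proof. vunf; ring. Qed.

Lemma line_pre p k z' : mu0 k = 0 -> k <> v0 -> mu0 (vsub z' (f p)) = 0 ->
  mu0 (vsub z' (f (vadd p k))) = 0 -> exists s, z' = f (vadd p (vsc s k)).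
Proof.
move=> hk hn h1 h2; have [z hz'] := fsurj z'; subst z'.
have {h1} h1 := (fN z p).2 h1; have {h2} h2 := (fN z (vadd p k)).2 h2.
have e : vsub z (vadd p k) = vsub (vsub z p) k by vring.
rewrite e in h2.
have := null_par hk hn h1 h2; move: (_ / _) => s hz.
exists s; congr f; move: hz; rewrite /vsc /vsub /vadd; case: z {h1 h2 e} => z1 z2 z3 z4 /= [] ????.
apply: veq => /=; lra.
Qed.

Lemma mu_line4 (d b c : V) s t : mu0 b = 0 -> mu0 c = 0 ->
  mu0 (vsub (vadd d (vsc s b)) (vsc t c)) =
  mu0 d + 2 * s * ip d b - 2 * t * (ip d c + s * ip b c).
Proof. move=> hb hc; move: hb hc; vunf => hb hc. nra. Qed.


Lemma fwd x y : mu0 (vsub x y) = 0 -> mu0 (vsub (f x) (f y)) = 0.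
Proof. exact: (fN x y).1. Qed.
Lemma bwd x y : mu0 (vsub (f x) (f y)) = 0 -> mu0 (vsub x y) = 0.
Proof. exact: (fN x y).2. Qed.

Lemma mu_subC u w : mu0 (vsub u w) = mu0 (vsub w u).
Proof. vunf; ring. Qed.

Lemma keyP x a b : mu0 a = 0 -> mu0 b = 0 -> ip a b != 0 ->
  ip (vsub (f (vadd x b)) (f x)) (vsub (f (vadd (vadd x a) b)) (f (vadd x a))) = 0.
Proof.
move=> ha hb hab.
have hb0 : b <> v0.
  move=> e; move: hab; rewrite e /ip /v0 /=.
  have -> : c1 a * 0 + c2 a * 0 + c3 a * 0 - c4 a * 0 = 0 by ring.
  by rewrite eqxx.
set X := f x; set B := f (vadd x b); set A := f (vadd x a).
set Y := f (vadd (vadd x a) b).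
set b' := vsub B X; set c' := vsub Y A.
have hb' : mu0 b' = 0.
  rewrite /b' mu_subC; apply: fwd.
  have -> : vsub x (vadd x b) = vsc (-1) b by vring.
  by rewrite mu_sc hb mulr0.
have hc' : mu0 c' = 0.
  rewrite /c' mu_subC; apply: fwd.
  have -> : vsub (vadd x a) (vadd (vadd x a) b) = vsc (-1) b by vring.
  by rewrite mu_sc hb mulr0.
have hc0 : c' <> v0.
  move=> e; apply: hb0.
  have eY : Y = A.
    move: e; rewrite /c' /vsub /v0 => -[] ????; apply: veq; lra.
  have := finj eY => e2; apply: veq; move: e2; rewrite /vadd /v0 => -[] /=; lra.
case: (eqVneq (ip b' c') 0) => // hC; exfalso.
set d := vsub X A.
set s0 := - (ip d c') / ip b' c'.
have hs0 : ip d c' + s0 * ip b' c' = 0 by rewrite /s0; field.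
set z' := vadd X (vsc s0 b').
have [s hs] : exists s, z' = f (vadd x (vsc s b)).
  apply: line_pre => //.
  - have -> : vsub z' X = vsc s0 b' by rewrite /z'; vring.
    by rewrite mu_sc hb' mulr0.
  - have -> : vsub z' (f (vadd x b)) = vsc (s0 - 1) b' by rewrite /z' /b'; vring.
    by rewrite mu_sc hb' mulr0.
set w := vadd (vadd x a) (vsc s b).
have hzw : mu0 (vsub z' (f w)) = 0.
  rewrite hs; apply: fwd.
  have -> : vsub (vadd x (vsc s b)) w = vsc (-1) a by rewrite /w; vring.
  by rewrite mu_sc ha mulr0.
have hwA : mu0 (vsub (f w) A) = 0.
  apply: fwd; have -> : vsub w (vadd x a) = vsc s b by rewrite /w; vring.
  by rewrite mu_sc hb mulr0.
have hwY : mu0 (vsub (vsub (f w) A) c') = 0.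
  have -> : vsub (vsub (f w) A) c' = vsub (f w) Y by rewrite /c'; vring.
  apply: fwd; have -> : vsub w (vadd (vadd x a) b) = vsc (s - 1) b by rewrite /w; vring.
  by rewrite mu_sc hb mulr0.
have := null_par hc' hc0 hwA hwY; move: (_ / _) => t ht.
have efw : f w = vadd A (vsc t c').
  move: ht; rewrite /vsub /vsc /vadd; case: (f w) => ???? /= [] ????; apply: veq => /=; lra.
have K0 : mu0 d + 2 * s0 * ip d b' = 0.
  move: hzw; rewrite efw.
  have -> : vsub z' (vadd A (vsc t c')) = vsub (vadd d (vsc s0 b')) (vsc t c')
    by rewrite /z' /d; vring.
  by rewrite mu_line4 // hs0 mulr0 subr0.
set w2 := vadd A (vsc (t + 1) c').
have [r hr] : exists r, w2 = f (vadd (vadd x a) (vsc r b)).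
  apply: line_pre => //.
  - have -> : vsub w2 A = vsc (t + 1) c' by rewrite /w2; vring.
    by rewrite mu_sc hc' mulr0.
  - have -> : vsub w2 (f (vadd (vadd x a) b)) = vsc t c' by rewrite /w2 /c' /Y; vring.
    by rewrite mu_sc hc' mulr0.
have hz2 : mu0 (vsub z' w2) = 0.
  have -> : vsub z' w2 = vsub (vadd d (vsc s0 b')) (vsc (t + 1) c')
    by rewrite /z' /d /w2; vring.
  by rewrite mu_line4 // hs0 mulr0 subr0.
have hsr : s = r.
  move: hz2; rewrite hs hr => /bwd.
  have -> : vsub (vadd x (vsc s b)) (vadd (vadd x a) (vsc r b)) =
            vsub (vsc (s - r) b) a by vring.
  rewrite mu_sub mu_sc ha hb.
  have -> : ip (vsc (s - r) b) a = (s - r) * ip a b by vunf; ring.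
  move=> h; have : (s - r) * ip a b = 0 by lra.
  by move/eqP; rewrite mulf_eq0 (negbTE hab) orbF subr_eq0 => /eqP.
have : w2 = f w by rewrite hr /w hsr.
rewrite efw /w2 => e; apply: hc0; move: e.
rewrite /vadd /vsc => -[] ????; apply: veq; rewrite /v0 /=; nra.
Qed.

Lemma vinv (u v : V) : u = v -> [/\ c1 u = c1 v, c2 u = c2 v, c3 u = c3 v & c4 u = c4 v].
Proof. by move=> ->. Qed.

Lemma aux_lin (u v l m : Q) : 1 - m != 0 -> v - u = l * v - m * u -> u = (1 - l) / (1 - m) * v.
Proof. move=> hm h; apply: (mulfI hm); have -> : (1 - m) * u = (1 - l) * v by lra. field. done. Qed.

Lemma ip_sc k u w : ip (vsc k u) w = k * ip u w.
Proof. vunf; ring. Qed.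

Lemma par x a b : mu0 a = 0 -> mu0 b = 0 -> ip a b != 0 ->
  f (vadd (vadd x a) b) = vsub (vadd (f (vadd x a)) (f (vadd x b))) (f x).
Proof.
move=> ha hb hab.
have hba : ip b a != 0 by rewrite ipC.
have P1 := keyP x ha hb hab.
have P2 := keyP x hb ha hba.
have e : vadd (vadd x b) a = vadd (vadd x a) b by vring.
rewrite e in P2.
set X := f x in P1 P2 *; set B := f (vadd x b) in P1 P2 *; set A := f (vadd x a) in P1 P2 *.
set Y := f (vadd (vadd x a) b) in P1 P2 *.
have nz : forall u, mu0 u = 0 -> ip a u != 0 -> u <> v0.
  move=> u _ h e0; move: h; rewrite e0 /ip /v0 /=.
  have -> : c1 a * 0 + c2 a * 0 + c3 a * 0 - c4 a * 0 = 0 by ring.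
  by rewrite eqxx.
have nullsub : forall y z, mu0 (vsub y z) = 0 -> mu0 (vsub (f z) (f y)) = 0.
  by move=> y z h; rewrite mu_subC; apply: fwd.
have hb' : mu0 (vsub B X) = 0.
  apply: nullsub; have -> : vsub x (vadd x b) = vsc (-1) b by vring.
  by rewrite mu_sc hb mulr0.
have ha' : mu0 (vsub A X) = 0.
  apply: nullsub; have -> : vsub x (vadd x a) = vsc (-1) a by vring.
  by rewrite mu_sc ha mulr0.
have hc' : mu0 (vsub Y A) = 0.
  apply: nullsub; have -> : vsub (vadd x a) (vadd (vadd x a) b) = vsc (-1) b by vring.
  by rewrite mu_sc hb mulr0.
have hd' : mu0 (vsub Y B) = 0.
  apply: nullsub; have -> : vsub (vadd x b) (vadd (vadd x a) b) = vsc (-1) a by vring.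
  by rewrite mu_sc ha mulr0.
have hab' : ip (vsub A X) (vsub B X) != 0.
  apply/eqP => h0.
  have : mu0 (vsub A B) = 0.
    have -> : vsub A B = vsub (vsub A X) (vsub B X) by vring.
    by rewrite mu_sub ha' hb' h0; ring.
  move/bwd; have -> : vsub (vadd x a) (vadd x b) = vsub a b by vring.
  rewrite mu_sub ha hb => h1; move: hab; rewrite (_ : ip a b = 0) ?eqxx //; lra.
have hb0 : vsub B X <> v0.
  move=> e0; move: hab'; rewrite e0 /ip /v0 /=.
  have -> : forall r1 r2 r3 r4 : Q, r1 * 0 + r2 * 0 + r3 * 0 - r4 * 0 = 0 by move=> *; ring.
  by rewrite eqxx.
have ha0 : vsub A X <> v0.
  move=> e0; move: hab'; rewrite e0 /ip /v0 /=.
  have -> : forall r1 r2 r3 r4 : Q, 0 * r1 + 0 * r2 + 0 * r3 - 0 * r4 = 0 by move=> *; ring.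
  by rewrite eqxx.
have E1 := L0 hc' hb' hb0 (etrans (ipC _ _) P1).
have E2 := L0 hd' ha' ha0 (etrans (ipC _ _) P2).
move: (c4 (vsub Y A) / _) E1 => l E1; move: (c4 (vsub Y B) / _) E2 => m E2.
case: (eqVneq m 1) => [hm1|hm].
  rewrite hm1 in E2; case: (vinv E2) => /= ????.
  apply: veq => /=; lra.
exfalso; move: hab'.
have hm' : 1 - m != 0 by rewrite subr_eq0 eq_sym.
have -> : vsub A X = vsc ((1 - l) / (1 - m)) (vsub B X).
  case: (vinv E1) => /= ????; case: (vinv E2) => /= ????.
  apply: veq => /=; apply: aux_lin => //; lra.
by rewrite ip_sc -/(mu0 _) hb' mulr0 eqxx.
Qed.

Definition pA := mkV 1 0 0 1.
Definition pB := mkV (-1) 0 0 1.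
Definition pC := mkV 0 1 0 1.
Definition pD := mkV 0 0 1 1.
Definition m1 := mkV 0 1 0 (-1).
Definition m2 := mkV 0 0 1 (-1).
Definition m3 := mkV 2 1 2 3.
Definition m4 := mkV 1 2 2 3.

Definition D x a := vsub (f (vadd x a)) (f x).

Lemma Dstep p m c d x : mu0 p = 0 -> mu0 m = 0 -> ip p m != 0 ->
  D (vadd x (vsc d m)) (vsc c p) = D x (vsc c p).
Proof.
move=> hp hm hpm; rewrite /D.
case: (eqVneq c 0) => [->|hc].
  have e : forall y, vadd y (vsc 0 p) = y by move=> y; vring.
  rewrite !e; vring.
case: (eqVneq d 0) => [->|hd].
  have e : vadd x (vsc 0 m) = x by vring.
  by rewrite e.
have e : vadd (vadd x (vsc d m)) (vsc c p) = vadd (vadd x (vsc c p)) (vsc d m) by vring.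
rewrite e par.
- vring.
- by rewrite mu_sc hp mulr0.
- by rewrite mu_sc hm mulr0.
- have -> : ip (vsc c p) (vsc d m) = c * d * ip p m by vunf; ring.
  by rewrite !mulf_neq0.
Qed.

Lemma Dconst p : mu0 p = 0 -> ip p m1 != 0 -> ip p m2 != 0 -> ip p m3 != 0 -> ip p m4 != 0 ->
  forall c x w, D (vadd x w) (vsc c p) = D x (vsc c p).
Proof.
move=> hp h1 h2 h3 h4 c x w.
have e : vadd x w = vadd (vadd (vadd (vadd x
    (vsc ((5 * c1 w + 5 * c2 w - 3 * c3 w - 3 * c4 w) / 8) m1))
    (vsc ((- 2 * c1 w - 2 * c2 w + 6 * c3 w - 2 * c4 w) / 8) m2))
    (vsc ((7 * c1 w - c2 w - c3 w - c4 w) / 8) m3))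
    (vsc ((- 6 * c1 w + 2 * c2 w + 2 * c3 w + 2 * c4 w) / 8) m4).
  by apply: veq; rewrite /vadd /vsc /m1 /m2 /m3 /m4 /=; field.
rewrite e !Dstep //; rewrite /mu0 /ip /=; ring.
Qed.


Lemma fstep p : mu0 p = 0 -> ip p m1 != 0 -> ip p m2 != 0 -> ip p m3 != 0 -> ip p m4 != 0 ->
  forall c y, f (vadd y (vsc c p)) = vadd (f y) (D v0 (vsc c p)).
Proof.
move=> hp h1 h2 h3 h4 c y.
have := Dconst hp h1 h2 h3 h4 c v0 y.
have -> : vadd v0 y = y by vring.
rewrite /D => e; apply: veq; case: (vinv e) => /= ????; lra.
Qed.

Ltac numchk := by apply/eqP; rewrite /ip /=; lra.

Lemma fA c y : f (vadd y (vsc c pA)) = vadd (f y) (D v0 (vsc c pA)).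
Proof. apply: fstep; first (by rewrite /mu0 /ip /=; ring); numchk. Qed.
Lemma fB c y : f (vadd y (vsc c pB)) = vadd (f y) (D v0 (vsc c pB)).
Proof. apply: fstep; first (by rewrite /mu0 /ip /=; ring); numchk. Qed.
Lemma fC c y : f (vadd y (vsc c pC)) = vadd (f y) (D v0 (vsc c pC)).
Proof. apply: fstep; first (by rewrite /mu0 /ip /=; ring); numchk. Qed.
Lemma fD c y : f (vadd y (vsc c pD)) = vadd (f y) (D v0 (vsc c pD)).
Proof. apply: fstep; first (by rewrite /mu0 /ip /=; ring); numchk. Qed.

Lemma decompB x v : vadd x v = vadd (vadd (vadd (vadd x
   (vsc ((c1 v + c4 v - c2 v - c3 v) / 2) pA))
   (vsc ((c4 v - c2 v - c3 v - c1 v) / 2) pB))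
   (vsc (c2 v) pC)) (vsc (c3 v) pD).
Proof. by apply: veq; rewrite /vadd /vsc /pA /pB /pC /pD /=; field. Qed.

Lemma vec_ac (a b d1 d2 d3 d4 : V) : vadd (vadd (vadd (vadd a d1) d2) d3) d4 =
  vsub (vadd a (vadd (vadd (vadd (vadd b d1) d2) d3) d4)) b.
Proof. vring. Qed.

Lemma f_add x v : f (vadd x v) = vsub (vadd (f x) (f v)) (f v0).
Proof.
have ev : v = vadd v0 v by vring.
rewrite {2}ev (decompB x v) (decompB v0 v) !fD !fC !fB !fA.
exact: vec_ac.
Qed.

End F.

Section Psi.
Variable psi : V -> V.
Hypothesis padd : forall u v, psi (vadd u v) = vadd (psi u) (psi v).
Hypothesis pinj : injective psi.
Hypothesis psurj : forall y, exists x, psi x = y.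
Hypothesis pnull : forall v, mu0 v = 0 <-> mu0 (psi v) = 0.
Hypothesis pS : forall v, c4 v = 0 -> c4 (psi v) = 0 -> mu0 v = mu0 (psi v).

Lemma psi0 : psi v0 = v0.
Proof.
have := padd v0 v0; have -> : vadd v0 v0 = v0 by vring.
move=> e; case: (vinv e) => /= ????; apply: veq; rewrite /v0 /=; lra.
Qed.

Lemma psub u v : psi (vsub u v) = vsub (psi u) (psi v).
Proof.
have := padd (vsub u v) v; have -> : vadd (vsub u v) v = u by vring.
move=> e; case: (vinv e) => /= ????; apply: veq => /=; lra.
Qed.

Lemma psi_nz n : n <> v0 -> psi n <> v0.
Proof. by move=> hn e; apply: hn; apply: pinj; rewrite e psi0. Qed.

Lemma pnull1 v : mu0 v = 0 -> mu0 (psi v) = 0.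
Proof. exact: (pnull v).1. Qed.

Definition phi n s := c4 (psi (vsc s n)) / c4 (psi n).

Lemma psi_line n s : mu0 n = 0 -> n <> v0 -> psi (vsc s n) = vsc (phi n s) (psi n).
Proof.
move=> hn hn0; rewrite /phi; apply: null_par.
- by apply: pnull1.
- exact: psi_nz.
- by apply: pnull1; rewrite mu_sc hn mulr0.
- rewrite -psub; apply: pnull1.
  have -> : vsub (vsc s n) n = vsc (s - 1) n by vring.
  by rewrite mu_sc hn mulr0.
Qed.

Lemma phiD n s t : phi n (s + t) = phi n s + phi n t.
Proof.
rewrite /phi; have -> : vsc (s + t) n = vadd (vsc s n) (vsc t n) by vring.
by rewrite padd /= mulrDl.
Qed.

Lemma phi0 n : phi n 0 = 0.
Proof.
rewrite /phi; have -> : vsc 0 n = v0 by vring.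
by rewrite psi0 /= mul0r.
Qed.

Lemma phiN n s : phi n (- s) = - phi n s.
Proof. have := phiD n s (- s); rewrite subrr phi0 => h; lra. Qed.

Lemma phiB n s t : phi n (s - t) = phi n s - phi n t.
Proof. by rewrite phiD phiN. Qed.

Lemma phi1 n : mu0 n = 0 -> n <> v0 -> phi n 1 = 1.
Proof.
move=> hn hn0; rewrite /phi; have -> : vsc 1 n = n by vring.
apply: divff; apply: null_c4; [exact: pnull1 | exact: psi_nz].
Qed.

Lemma phi_inj n s t : mu0 n = 0 -> n <> v0 -> phi n s = phi n t -> s = t.
Proof.
move=> hn hn0 e.
have : vsc s n = vsc t n by apply: pinj; rewrite !psi_line // e.
move/(congr1 c4) => /= h; have h4 := null_c4 hn hn0.
by apply: (mulIf h4).
Qed.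

Lemma phi_surj n r : mu0 n = 0 -> n <> v0 -> exists s, phi n s = r.
Proof.
move=> hn hn0; have [u hu] := psurj (vsc r (psi n)).
have hu0 : mu0 u = 0.
  by apply/pnull; rewrite hu mu_sc -/(mu0 _) (pnull1 hn) mulr0.
have hun : mu0 (vsub u n) = 0.
  apply/pnull; rewrite psub hu.
  have -> : vsub (vsc r (psi n)) (psi n) = vsc (r - 1) (psi n) by vring.
  by rewrite mu_sc (pnull1 hn) mulr0.
have := null_par hn hn0 hu0 hun; move: (_ / _) => l hl.
exists l; have := hu; rewrite hl psi_line // => /(congr1 c4) /= h.
have h4 := null_c4 (pnull1 hn) (psi_nz hn0).
by apply: (mulIf h4).
Qed.

Lemma pip a b : mu0 a = 0 -> mu0 b = 0 -> ip a b != 0 -> ip (psi a) (psi b) != 0.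
Proof.
move=> ha hb hab; apply/eqP => h.
have : mu0 (psi (vsub a b)) = 0 by rewrite psub mu_sub h (pnull1 ha) (pnull1 hb); ring.
move/(pnull (vsub a b)).2; rewrite mu_sub ha hb => h2; move: hab; rewrite (_ : ip a b = 0) ?eqxx //; lra.
Qed.

Lemma indep (a b c : V) (al be ga : Q) : mu0 a = 0 -> mu0 b = 0 -> mu0 c = 0 ->
  ip a b != 0 -> ip a c != 0 -> ip b c != 0 ->
  vadd (vadd (vsc al a) (vsc be b)) (vsc ga c) = v0 -> [/\ al = 0, be = 0 & ga = 0].
Proof.
move=> ha hb hc hab hac hbc e.
have E1 : be * ip a b + ga * ip a c = 0.
  have h := congr1 (ip^~ a) e; simpl in h.
  have e1 : ip (vadd (vadd (vsc al a) (vsc be b)) (vsc ga c)) a =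
     al * mu0 a + be * ip a b + ga * ip a c by vunf; ring.
  have e2 : ip v0 a = 0 by vunf; ring.
  rewrite e1 e2 ha in h; lra.
have E2 : al * ip a b + ga * ip b c = 0.
  have h := congr1 (ip^~ b) e; simpl in h.
  have e1 : ip (vadd (vadd (vsc al a) (vsc be b)) (vsc ga c)) b =
     al * ip a b + be * mu0 b + ga * ip b c by vunf; ring.
  have e2 : ip v0 b = 0 by vunf; ring.
  rewrite e1 e2 hb in h; lra.
have E3 : al * ip a c + be * ip b c = 0.
  have h := congr1 (ip^~ c) e; simpl in h.
  have e1 : ip (vadd (vadd (vsc al a) (vsc be b)) (vsc ga c)) c =
     al * ip a c + be * ip b c + ga * mu0 c by vunf; ring.
  have e2 : ip v0 c = 0 by vunf; ring.
  rewrite e1 e2 hc in h; lra.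
have hg : ga = 0.
  have h : 2 * ga * (ip a c * ip b c) = 0.
    have -> : 2 * ga * (ip a c * ip b c) = ip a c * (al * ip a b + ga * ip b c)
     + ip b c * (be * ip a b + ga * ip a c) - ip a b * (al * ip a c + be * ip b c) by ring.
    rewrite E1 E2 E3; ring.
  have hx : ip a c * ip b c != 0 by rewrite mulf_neq0.
  apply: (mulIf hx); rewrite mul0r; nra.
move: E1 E2; rewrite hg !mul0r !addr0 => /eqP; rewrite mulf_eq0 (negbTE hab) orbF => /eqP hb'.
by move/eqP; rewrite mulf_eq0 (negbTE hab) orbF => /eqP ha'.
Qed.


Lemma ip_nzl a b : ip a b != 0 -> a <> v0.
Proof.
move=> h e; move: h; rewrite e /ip /v0 /=.
have -> : 0 * c1 b + 0 * c2 b + 0 * c3 b - 0 * c4 b = 0 by ring.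
by rewrite eqxx.
Qed.
Lemma ip_nzr a b : ip a b != 0 -> b <> v0.
Proof. by rewrite ipC; apply: ip_nzl. Qed.

Lemma quad a b c d : mu0 a = 0 -> mu0 b = 0 -> mu0 c = 0 -> mu0 d = 0 -> d <> v0 ->
  ip a b != 0 -> ip a c != 0 -> ip b c != 0 -> vadd a b = vadd c d ->
  forall s, [/\ phi a s = phi d s, phi b s = phi d s & phi c s = phi d s].
Proof.
move=> ha hb hc hd hd0 hab hac hbc e s.
have ha0 := ip_nzl hab; have hb0 := ip_nzr hab; have hc0 := ip_nzr hac.
have e1 : psi (vsc s (vadd a b)) = psi (vsc s (vadd c d)) by rewrite e.
have ev : forall x y, vsc s (vadd x y) = vadd (vsc s x) (vsc s y) by move=> x y; vring.
rewrite !ev !padd !psi_line // in e1.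
have e0 : psi (vadd a b) = psi (vadd c d) by rewrite e.
rewrite !padd in e0.
have ed : psi d = vsub (vadd (psi a) (psi b)) (psi c).
  case: (vinv e0) => /= ????; apply: veq => /=; lra.
rewrite ed in e1.
have := indep (pnull1 ha) (pnull1 hb) (pnull1 hc) (pip ha hb hab) (pip ha hc hac) (pip hb hc hbc)
  (al := phi a s - phi d s) (be := phi b s - phi d s) (ga := phi d s - phi c s).
case.
  case: (vinv e1) => /= ????; apply: veq; rewrite /v0 /=; lra.
move=> /eqP; rewrite subr_eq0 => /eqP -> /eqP; rewrite subr_eq0 => /eqP ->.
by move=> /eqP; rewrite subr_eq0 => /eqP ->.
Qed.


Definition qC := mkV 0 (-1) 0 1.
Definition qD := mkV 0 0 (-1) 1.
Definition w2 := mkV 0 2 0 0.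

Ltac nulchk := by rewrite /mu0 /ip /=; ring.
Ltac numchk := by apply/eqP; rewrite /ip /=; lra.
Ltac nzchk := by move/(congr1 c4); rewrite /=; lra.

Lemma phiBA s : phi pB s = phi pA s.
Proof.
have [h1 h2 _] := @quad pA pB pC qC ltac:(nulchk) ltac:(nulchk) ltac:(nulchk) ltac:(nulchk)
  ltac:(nzchk) ltac:(numchk) ltac:(numchk) ltac:(numchk) ltac:(vring) s.
by rewrite h1 h2.
Qed.
Lemma phiCA s : phi pC s = phi pA s.
Proof.
have [h1 _ h3] := @quad pA pB pC qC ltac:(nulchk) ltac:(nulchk) ltac:(nulchk) ltac:(nulchk)
  ltac:(nzchk) ltac:(numchk) ltac:(numchk) ltac:(numchk) ltac:(vring) s.
by rewrite h1 h3.
Qed.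
Lemma phiDA s : phi pD s = phi pA s.
Proof.
have [h1 _ h3] := @quad pA pB pD qD ltac:(nulchk) ltac:(nulchk) ltac:(nulchk) ltac:(nulchk)
  ltac:(nzchk) ltac:(numchk) ltac:(numchk) ltac:(numchk) ltac:(vring) s.
by rewrite h1 h3.
Qed.

Lemma mu_comb2 al be a b w : mu0 (vadd (vadd (vsc al a) (vsc be b)) w) =
  al^+2 * mu0 a + be^+2 * mu0 b + mu0 w + 2 * al * be * ip a b + 2 * al * ip a w + 2 * be * ip b w.
Proof. vunf; ring. Qed.

Notation ph := (phi pA).

Lemma inv_rel s t : s * t = 1 ->
  2 * ph s * ph t * ip (psi pA) (psi pB) + 2 * ph s * ip (psi pA) (psi w2)
  + 2 * ph t * ip (psi pB) (psi w2) + mu0 (psi w2) = 0.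
Proof.
move=> hst.
have hv : mu0 (vadd (vadd (vsc s pA) (vsc t pB)) w2) = 0.
  rewrite /mu0 /ip /=; nra.
have := pnull1 hv; rewrite !padd !psi_line; try (nulchk || nzchk).
rewrite phiBA mu_comb2 (pnull1 (_ : mu0 pA = 0)); last nulchk.
rewrite (pnull1 (_ : mu0 pB = 0)); last nulchk.
move=> h; lra.
Qed.


Lemma pA_null : mu0 pA = 0. Proof. nulchk. Qed.
Lemma pA_nz : pA <> v0. Proof. nzchk. Qed.

Lemma ph1 : ph 1 = 1. Proof. exact: phi1 pA_null pA_nz. Qed.
Lemma phm1 : ph (-1) = -1. Proof. by rewrite phiN ph1. Qed.
Lemma ph2 : ph 2 = 2. Proof. by rewrite (_ : (2 : Q) = 1 + 1) // phiD ph1. Qed.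
Lemma phh : ph (2^-1) = 2^-1.
Proof.
have := phiD pA (2^-1) (2^-1); rewrite (_ : (2:Q)^-1 + 2^-1 = 1); last by field.
rewrite ph1 => h; lra.
Qed.

Lemma ph_inj s t : ph s = ph t -> s = t.
Proof. exact: phi_inj pA_null pA_nz. Qed.

Lemma phV s : ph (s^-1) = (ph s)^-1.
Proof.
case: (eqVneq s 0) => [->|hs]; first by rewrite invr0 phi0 invr0.
have h11 := inv_rel (mulr1 1); rewrite ph1 in h11.
have hmm := inv_rel (_ : -1 * -1 = 1); rewrite phm1 in hmm.
have h2h := inv_rel (_ : 2 * 2^-1 = 1); rewrite ph2 phh in h2h.
have hA : ip (psi pA) (psi pB) != 0 by apply: pip; [nulchk | nulchk | numchk].
move: (ip (psi pA) (psi pB)) (ip (psi pA) (psi w2)) (ip (psi pB) (psi w2)) (mu0 (psi w2))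
  hA h11 hmm h2h (inv_rel (mulfV hs)) => A X Y W hA h11 hmm h2h hs'.
have [hX hY hW] : [/\ X = 0, Y = 0 & W = - 2 * A].
  rewrite mulN1r opprK in hmm; split; nra.
rewrite hX hY hW in hs'.
have hp : ph s * ph (s^-1) = 1.
  have : (ph s * ph (s^-1) - 1) * (2 * A) = 0 by rewrite -hs'; ring.
  move/eqP; rewrite mulf_eq0 mulf_eq0 (negbTE hA) pnatr_eq0 /= !orbF subr_eq0.
  by move/eqP.
have hx : ph s != 0 by apply/eqP => e; move: hp; rewrite e mul0r => /eqP; rewrite eq_sym oner_eq0.
by rewrite -[ph s^-1](mulKf hx) hp mulr1.
Unshelve. all: try by rewrite mulN1r opprK.
all: try by rewrite mulfV.
Qed.


Lemma phB s t : ph (s - t) = ph s - ph t. Proof. exact: phiB. Qed.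
Lemma phD s t : ph (s + t) = ph s + ph t. Proof. exact: phiD. Qed.

Lemma ph_sq s : ph (s * s) = ph s * ph s.
Proof.
case: (eqVneq s 0) => [->|hs]; first by rewrite mul0r phi0 mul0r.
case: (eqVneq s (-1)) => [->|hs1]; first by rewrite mulN1r opprK ph1 phm1 mulN1r opprK.
have hs1' : s + 1 != 0 by apply: contra_neq hs1 => h; lra.
have id1 : s^-1 - (s + 1)^-1 = (s * s + s)^-1.
  rewrite (_ : s * s + s = s * (s + 1)); last by ring.
  by field; rewrite hs hs1'.
have hp0 : ph s != 0 by apply: contra_neq hs => h; apply: ph_inj; rewrite h phi0.
have hp1 : ph s + 1 != 0.
  apply: contra_neq hs1 => h; apply: ph_inj; rewrite phm1; lra.
have := congr1 ph id1; rewrite phB !phV phD ph1 phD.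
have id2 : (ph s)^-1 - (ph s + 1)^-1 = (ph s * ph s + ph s)^-1.
  rewrite (_ : ph s * ph s + ph s = ph s * (ph s + 1)); last by ring.
  by field; rewrite hp0 hp1.
rewrite id2 => /invr_inj h; lra.
Qed.

Lemma ph_mul s t : ph (s * t) = ph s * ph t.
Proof.
have := ph_sq (s + t).
rewrite (_ : (s + t) * (s + t) = s * s + (s * t + s * t) + t * t); last by ring.
rewrite !phD ph_sq (ph_sq t) => h; nra.
Qed.

Definition cA v := (c1 v + c4 v - c2 v - c3 v) / 2.
Definition cB v := (c4 v - c2 v - c3 v - c1 v) / 2.

Lemma decomp v : v = vadd (vadd (vadd (vsc (cA v) pA) (vsc (cB v) pB)) (vsc (c2 v) pC))
   (vsc (c3 v) pD).
Proof. by apply: veq; rewrite /vadd /vsc /pA /pB /pC /pD /cA /cB /=; field. Qed.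

Lemma psi_dec v : psi v = vadd (vadd (vadd (vsc (ph (cA v)) (psi pA)) (vsc (ph (cB v)) (psi pB)))
   (vsc (ph (c2 v)) (psi pC))) (vsc (ph (c3 v)) (psi pD)).
Proof.
rewrite {1}(decomp v) !padd !psi_line; try (nulchk || nzchk).
by rewrite phiBA phiCA phiDA.
Qed.

Lemma psi_semi s v : psi (vsc s v) = vsc (ph s) (psi v).
Proof.
rewrite psi_dec (psi_dec v).
have -> : cA (vsc s v) = s * cA v by rewrite /cA /=; field.
have -> : cB (vsc s v) = s * cB v by rewrite /cB /=; field.
rewrite /= !ph_mul.
move: (ph s) (ph (cA v)) (ph (cB v)) (ph (c2 v)) (ph (c3 v)) (psi pA) (psi pB) (psi pC) (psi pD).
move=> *; vring.
Qed.


Definition e1 := mkV 1 0 0 0.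
Definition e2 := mkV 0 1 0 0.
Definition e3 := mkV 0 0 1 0.
Definition e4 := mkV 0 0 0 1.

Lemma exists_w : exists w, [/\ c4 w = 0, c4 (psi w) = 0 & mu0 w != 0].
Proof.
case: (eqVneq (c4 (psi e1)) 0) => h1.
  exists e1; split => //; apply/eqP; rewrite /mu0 /ip /=; lra.
have [x hx] := phi_surj (- c4 (psi e2) / c4 (psi e1)) pA_null pA_nz.
exists (vadd (vsc x e1) e2); split.
- by rewrite /=; ring.
- rewrite padd psi_semi /= hx; field; done.
- apply/eqP; rewrite /mu0 /ip /=; nra.
Qed.

Lemma ph_id s : ph s = s.
Proof.
have [w [hw4 hpw4 hw0]] := exists_w.
have key : forall s, s ^+ 2 = ph s ^+ 2.
  move=> r; have := pS (v := vsc r w); rewrite psi_semi /= hw4 hpw4 !mulr0.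
  move=> /(_ erefl erefl); rewrite !mu_sc -(pS hw4 hpw4) => h.
  by apply: (mulIf hw0).
have h1 := key s; have h2 := key (s + 1); rewrite phD ph1 in h2.
rewrite !expr2 in h1 h2; nra.
Qed.

Lemma psi_lin s v : psi (vsc s v) = vsc s (psi v).
Proof. by rewrite psi_semi ph_id. Qed.

Lemma psi_std v : psi v = vadd (vadd (vadd (vsc (c1 v) (psi e1)) (vsc (c2 v) (psi e2)))
   (vsc (c3 v) (psi e3))) (vsc (c4 v) (psi e4)).
Proof.
have {1}-> : v = vadd (vadd (vadd (vsc (c1 v) e1) (vsc (c2 v) e2)) (vsc (c3 v) e3)) (vsc (c4 v) e4).
  by apply: veq; rewrite /= ; ring.
by rewrite !padd !psi_lin.
Qed.

Lemma mu_exp4 (x1 x2 x3 x4 : Q) b1 b2 b3 b4 :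
  mu0 (vadd (vadd (vadd (vsc x1 b1) (vsc x2 b2)) (vsc x3 b3)) (vsc x4 b4)) =
  x1 * x1 * ip b1 b1 + x2 * x2 * ip b2 b2 + x3 * x3 * ip b3 b3 + x4 * x4 * ip b4 b4
  + 2 * x1 * x2 * ip b1 b2 + 2 * x1 * x3 * ip b1 b3 + 2 * x1 * x4 * ip b1 b4
  + 2 * x2 * x3 * ip b2 b3 + 2 * x2 * x4 * ip b2 b4 + 2 * x3 * x4 * ip b3 b4.
Proof. vunf; ring. Qed.

Lemma conf v : mu0 (psi v) = ip (psi e1) (psi e1) * mu0 v.
Proof.
have F : forall a b c d, mu0 (mkV a b c d) = 0 ->
  mu0 (vadd (vadd (vadd (vsc a (psi e1)) (vsc b (psi e2))) (vsc c (psi e3))) (vsc d (psi e4))) = 0.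
  by move=> a b c d h; have := pnull1 h; rewrite (psi_std (mkV a b c d)).
have G1 := F 1 0 0 1 ltac:(nulchk); have G2 := F (-1) 0 0 1 ltac:(nulchk).
have G3 := F 0 1 0 1 ltac:(nulchk); have G4 := F 0 (-1) 0 1 ltac:(nulchk).
have G5 := F 0 0 1 1 ltac:(nulchk); have G6 := F 0 0 (-1) 1 ltac:(nulchk).
have G7 := F 3 4 0 5 ltac:(nulchk); have G8 := F 3 0 4 5 ltac:(nulchk).
have G9 := F 0 3 4 5 ltac:(nulchk).
move: G1 G2 G3 G4 G5 G6 G7 G8 G9; rewrite !mu_exp4.
rewrite (psi_std v) mu_exp4.
have -> : mu0 v = c1 v * c1 v + c2 v * c2 v + c3 v * c3 v - c4 v * c4 v by [].
move: (ip (psi e1) (psi e1)) (ip (psi e2) (psi e2)) (ip (psi e3) (psi e3)) (ip (psi e4) (psi e4))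
  (ip (psi e1) (psi e2)) (ip (psi e1) (psi e3)) (ip (psi e1) (psi e4))
  (ip (psi e2) (psi e3)) (ip (psi e2) (psi e4)) (ip (psi e3) (psi e4)).
move=> g11 g22 g33 g44 g12 g13 g14 g23 g24 g34 G1 G2 G3 G4 G5 G6 G7 G8 G9.
have h14 : g14 = 0 by lra.
have h24 : g24 = 0 by lra.
have h34 : g34 = 0 by lra.
have h44 : g44 = - g11 by lra.
have h22 : g22 = g11 by lra.
have h33 : g33 = g11 by lra.
have h12 : g12 = 0 by lra.
have h13 : g13 = 0 by lra.
have h23 : g23 = 0 by lra.
rewrite h14 h24 h34 h44 h22 h33 h12 h13 h23; ring.
Qed.

Lemma psi_mu v : mu0 (psi v) = mu0 v.
Proof.
have [w [hw4 hpw4 hw0]] := exists_w.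
have hk : ip (psi e1) (psi e1) = 1.
  have := pS hw4 hpw4; rewrite conf => h.
  apply: (mulIf hw0); rewrite mul1r; by rewrite -h.
by rewrite conf hk mul1r.
Qed.

End Psi.
End Vec.

Ltac vunf := rewrite /mu0 /vadd /vsub /vsc /ip /v0 /=.
Ltac vring := apply veq; vunf; ring.
Ltac nulchk := by rewrite /mu0 /ip /=; ring.

Section Bridge.
Set Implicit Arguments. Unset Strict Implicit.
Variable Q : realFieldType.
Variables (B : Type) (IB Ph : B -> Prop) (W : B -> B -> Q -> Q -> Q -> Q -> Prop).
Hypothesis HS : SpecRel IB Ph W.

Definition Wv o b (u : V Q) := W o b (c1 u) (c2 u) (c3 u) (c4 u).

Lemma ph_mu o u v : IOb IB W o ->
  ((exists p, Ph p /\ Wv o p u /\ Wv o p v) <-> mu0 (vsub u v) = 0).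
Proof.
move=> Ho; case: HS => _ [Hph _].
have := Hph o (c1 u) (c2 u) (c3 u) (c4 u) (c1 v) (c2 v) (c3 v) (c4 v) Ho.
rewrite /Wv => ->; rewrite /mu0 /ip /= !expr2; split => h; lra.
Qed.

Lemma sep o u v : IOb IB W o -> (forall b, Wv o b u <-> Wv o b v) -> u = v.
Proof.
move=> Ho Huv.
have H : forall p, mu0 (vsub p u) = 0 -> mu0 (vsub p v) = 0.
  move=> p /(ph_mu p u Ho) [ph [h1 [h2 h3]]]; apply/(ph_mu p v Ho).
  by exists ph; split => //; split => //; apply/Huv.
have idt : forall c n, mu0 (vsub (vadd u (vsc c n)) v) =
   c * c * mu0 n + mu0 (vsub u v) + 2 * c * ip n (vsub u v) by move=> c n; vunf; ring.
have idu : forall c n, mu0 (vsub (vadd u (vsc c n)) u) = c * c * mu0 n by move=> c n; vunf; ring.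
have K : forall n, mu0 n = 0 -> ip n (vsub u v) = 0.
  move=> n hn.
  have h1 := H (vadd u (vsc 1 n)) ltac:(by rewrite idu hn mulr0).
  have h2 := H (vadd u (vsc 2 n)) ltac:(by rewrite idu hn mulr0).
  rewrite idt hn mulr0 add0r in h1; rewrite idt hn mulr0 add0r in h2; lra.
have kA := K (pA Q) ltac:(nulchk); have kB := K (pB Q) ltac:(nulchk).
have kC := K (pC Q) ltac:(nulchk); have kD := K (pD Q) ltac:(nulchk).
move: kA kB kC kD; rewrite /ip /= => kA kB kC kD.
apply: veq; lra.
Qed.


Lemma bridge o o' : IOb IB W o -> IOb IB W o' ->
  forall u u' v v', (forall b, Wv o b u <-> Wv o' b u') -> (forall b, Wv o b v <-> Wv o' b v') ->
  mu0 (vsub u' v') = mu0 (vsub u v).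
Proof.
move=> Ho Ho'.
have HS' := HS; case: HS' => _ [_ [Hev Hsym]].
have ex : forall u, exists u', forall b, Wv o b u <-> Wv o' b u'.
  move=> u; have [x1 [x2 [x3 [x4 h]]]] := Hev o o' (c1 u) (c2 u) (c3 u) (c4 u) Ho Ho'.
  by exists (mkV x1 x2 x3 x4).
have [f Hf] : exists f : V Q -> V Q, forall u b, Wv o b u <-> Wv o' b (f u).
  exists (fun u => proj1_sig (constructive_indefinite_description _ (ex u))).
  by move=> u; exact: (proj2_sig (constructive_indefinite_description _ (ex u))).
have finj : injective f.
  move=> u v e; apply: (sep Ho) => b; rewrite Hf e; split => h; by apply/Hf.
have fsurj : forall y, exists x, f x = y.
  move=> y; have [x1 [x2 [x3 [x4 h]]]] := Hev o' o (c1 y) (c2 y) (c3 y) (c4 y) Ho' Ho.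
  exists (mkV x1 x2 x3 x4); apply: (sep Ho') => b; rewrite -Hf.
  by rewrite /Wv /=; split => H; apply/h.
have fN : forall x y, mu0 (vsub x y) = 0 <-> mu0 (vsub (f x) (f y)) = 0.
  move=> x y; rewrite -(ph_mu _ _ Ho) -(ph_mu _ _ Ho').
  split => -[p [h1 [h2 h3]]]; exists p; split => //; split; by apply/Hf.
have fS : forall x y, c4 x = c4 y -> c4 (f x) = c4 (f y) ->
    mu0 (vsub x y) = mu0 (vsub (f x) (f y)).
  move=> x y h4 h4'.
  have := Hsym o o' (c1 x) (c2 x) (c3 x) (c4 x) (c1 (f x)) (c2 (f x)) (c3 (f x)) (c4 (f x))
    (c1 y) (c2 y) (c3 y) (c4 y) (c1 (f y)) (c2 (f y)) (c3 (f y)) (c4 (f y)) Ho Ho' h4 h4'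
    (Hf x) (Hf y).
  rewrite /mu0 /ip /= h4 h4' !expr2 => h; lra.
pose psi v := vsub (f v) (f (v0 Q)).
have fadd := f_add finj fsurj fN.
have padd : forall u v, psi (vadd u v) = vadd (psi u) (psi v).
  move=> u v; rewrite /psi fadd.
  move: (f u) (f v) (f (v0 Q)) => a b c; vring.
have pinj : injective psi.
  move=> u v; rewrite /psi => e; apply: finj; apply: veq; case: (vinv e) => /= ????; lra.
have psurj : forall y, exists x, psi x = y.
  move=> y; have [x hx] := fsurj (vadd y (f (v0 Q))); exists x; rewrite /psi hx.
  move: (f (v0 Q)) => c; vring.
have ev0 : forall v, vsub v (v0 Q) = v by move=> v; vring.
have pnull : forall v, mu0 v = 0 <-> mu0 (psi v) = 0.
  by move=> v; rewrite /psi -{1}(ev0 v); apply: fN.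
have pS : forall v, c4 v = 0 -> c4 (psi v) = 0 -> mu0 v = mu0 (psi v).
  move=> v h4 h4'; rewrite /psi -{1}(ev0 v); apply: fS => //=.
  by move: h4'; rewrite /psi /= => /eqP; rewrite subr_eq0 => /eqP.
have hpsi := psi_mu padd pinj psurj pnull pS.
have fsub : forall x y, vsub (f x) (f y) = psi (vsub x y).
  move=> x y; have := fadd y (vsub x y).
  have -> : vadd y (vsub x y) = x by vring.
  rewrite /psi => ->; move: (f y) (f (vsub x y)) (f (v0 Q)) => a b c; vring.
move=> u u' v v' hu hv.
have -> : u' = f u by apply: (sep Ho') => b; rewrite -hu; apply: Hf.
have -> : v' = f v by apply: (sep Ho') => b; rewrite -hv; apply: Hf.
by rewrite fsub hpsi.
Qed.

End Bridge.

Theorem theorem2 (Q : realFieldType) (B : Type) (IB Ph : B -> Prop)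
    (W : B -> B -> Q -> Q -> Q -> Q -> Prop) :
  SpecRel IB Ph W ->
  forall (o o' : B) (x1 x2 x3 x4 x1' x2' x3' x4' y1 y2 y3 y4 y1' y2' y3' y4' : Q),
    IOb IB W o -> IOb IB W o' ->
    (forall b, W o b x1 x2 x3 x4 <-> W o' b x1' x2' x3' x4') ->
    (forall b, W o b y1 y2 y3 y4 <-> W o' b y1' y2' y3' y4') ->
    mu x1 x2 x3 x4 y1 y2 y3 y4 = mu x1' x2' x3' x4' y1' y2' y3' y4'.
Proof.
move=> HS o o' x1 x2 x3 x4 x1' x2' x3' x4' y1 y2 y3 y4 y1' y2' y3' y4' Ho Ho' hx hy.
have := bridge HS Ho Ho' (u := mkV x1 x2 x3 x4) (u' := mkV x1' x2' x3' x4')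
  (v := mkV y1 y2 y3 y4) (v' := mkV y1' y2' y3' y4') hx hy.
rewrite /mu /mu0 /ip /= !expr2 => h; lra.
Qed.
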